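(* Let $X,Y$ be non-empty subsets of $A^+$. (i) If $X$ is a prefix code, $Y$ is a suffix code and $XY$ is a code, then $(X,Y)$ is a strong alternative code. (ii) If $(X,Y)$ is a strong alternative code, then $X$ is a prefix code and $Y$ is a suffix code.
   Context: $A$ is a finite alphabet, $A^*$ the set of words, $A^+$ the non-empty words, $XY=\{xy:x\in X,y\in Y\}$. For $X,Z\subseteq A^*$: $X^{-1}Z=\{u\in A^*: xu\in Z \text{ for some } x\in X\}$ and $ZY^{-1}=\{u\in A^*: uy\in Z\text{ for some } y\in Y\}$. A code is a subset of $A^+$ in which every word has at most one factorization into its elements. A prefix (suffix) code is a subset of $A^+$ in which no word is a proper prefix (suffix) of another. For non-empty $X,Y\subseteq A^+$, $(X,Y)$ is an alternative code if no word of $A^+$ admits two different similar alternative factorizations on $(X,Y)$ (factorizations $u_1\cdots u_n$, $n\ge2$, $u_i\in X\cup Y$, alternating between $X$ and $Y$; similar = beginning in the same set and ending in the same set); equivalently, $XY$ is a code and each element of $XY$ has exactly one factorization $xy$ with $x\in X,y\in Y$. An alternative code $(X,Y)$ is a strong alternative code if $X^{-1}(XY)\subseteq Y$ and $(XY)Y^{-1}\subseteq X$. *)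

(* Defs.v *)
From mathcomp Require Import all_boot.
Set Implicit Arguments. Unset Strict Implicit. Unset Printing Implicit Defensive.

Section Words.
Variable A : finType.
Definition lang := seq A -> Prop.

Definition in_Aplus (X : lang) : Prop := forall w, X w -> w <> [::].

Definition catl (X Y : lang) : lang :=
  fun w => exists x y, [/\ X x, Y y & w = x ++ y].

Definition lquot (X Z : lang) : lang := fun u => exists x, X x /\ Z (x ++ u).
Definition rquot (Z Y : lang) : lang := fun u => exists y, Y y /\ Z (u ++ y).

Definition subl (X Y : lang) : Prop := forall w, X w -> Y w.

Definition is_code (X : lang) : Prop :=
  in_Aplus X /\
  forall s1 s2 : seq (seq A),
    (forall w, w \in s1 -> X w) -> (forall w, w \in s2 -> X w) ->
    flatten s1 = flatten s2 -> s1 = s2.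

Definition is_prefix_code (X : lang) : Prop :=
  in_Aplus X /\ forall x y t, X x -> X y -> y = x ++ t -> t = [::].

Definition is_suffix_code (X : lang) : Prop :=
  in_Aplus X /\ forall x y t, X x -> X y -> y = t ++ x -> t = [::].

Fixpoint alt (X Y : lang) (b : bool) (s : seq (seq A)) : Prop :=
  match s with
  | [::] => True
  | u :: s' => (if b then X u else Y u) /\ alt X Y (~~ b) s'
  end.

(* (X,Y) alternative code: X, Y non-empty subsets of A^+ and no word admits
   two different similar alternative factorizations (n >= 2, same starting
   set b, same ending set, i.e. same parity of length given same start). *)
Definition alt_code (X Y : lang) : Prop :=
  [/\ (exists x, X x), (exists y, Y y), in_Aplus X, in_Aplus Y &
   forall (b : bool) (s1 s2 : seq (seq A)),
     alt X Y b s1 -> alt X Y b s2 ->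
     2 <= size s1 -> 2 <= size s2 ->
     odd (size s1) = odd (size s2) ->
     flatten s1 = flatten s2 -> s1 = s2].

Definition strong_alt_code (X Y : lang) : Prop :=
  [/\ alt_code X Y, subl (lquot X (catl X Y)) Y & subl (rquot (catl X Y) Y) X].
End Words.

(* Main.v *)
Require Import Defs.
From mathcomp Require Import all_boot.
From mathcomp Require Import zify.
From Stdlib Require Import Lia.
Set Implicit Arguments. Unset Strict Implicit.

Section Aux.
Variable A : finType.
Implicit Types (X Y : lang A).

Lemma cat_split (a b c d : seq A) : a ++ b = c ++ d ->
  (exists t, c = a ++ t /\ b = t ++ d) \/ (exists t, a = c ++ t /\ d = t ++ b).
Proof.
elim: a c => [|x a IH] [|y c] /=.
- by move=> ->; left; exists [::].
- by move=> ->; left; exists (y :: c).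
- by move=> <-; right; exists (x :: a).
- case=> <- /IH [[t [-> ->]]|[t [-> ->]]]; [left|right]; by exists t.
Qed.

Lemma pref_eq X (a b c d : seq A) : is_prefix_code X -> X a -> X c ->
  a ++ b = c ++ d -> a = c /\ b = d.
Proof.
move=> [_ HP] Ha Hc /cat_split [[t [E1 E2]]|[t [E1 E2]]].
- have := HP _ _ _ Ha Hc E1 => Et; subst; by rewrite cats0.
- have := HP _ _ _ Hc Ha E1 => Et; subst; by rewrite cats0.
Qed.

Lemma suff_eq Y (a b c d : seq A) : is_suffix_code Y -> Y b -> Y d ->
  a ++ b = c ++ d -> a = c /\ b = d.
Proof.
move=> [_ HS] Hb Hd /cat_split [[t [E1 E2]]|[t [E1 E2]]].
- have := HS _ _ _ Hd Hb E2 => Et; subst; by rewrite cats0.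
- have := HS _ _ _ Hb Hd E2 => Et; subst; by rewrite cats0.
Qed.

Fixpoint pairup (s : seq (seq A)) := match s with
  | a :: b :: r => (a ++ b) :: pairup r
  | [:: a] => [:: a]
  | [::] => [::] end.

Lemma pairup_flatten s : flatten (pairup s) = flatten s.
Proof.
move: {2}(size s) (leqnn (size s)) => n; elim: n s => [|n IH] [|a [|b r]] //= Hs.
rewrite IH ?catA //; lia.
Qed.

Lemma pairup_mem X Y s : alt X Y true s -> ~~ odd (size s) ->
  forall w, w \in pairup s -> catl X Y w.
Proof.
move: {2}(size s) (leqnn (size s)) => n; elim: n s => [|n IH] [|a [|b r]] //= Hs.
move=> [Ha [Hb Hr]] Ho w; rewrite in_cons => /orP [/eqP ->|Hw].
  + by exists a, b.
  + apply: (IH r) => //; first lia. by rewrite negbK in Ho.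
Qed.

Lemma even_uniq X Y s1 s2 : is_prefix_code X ->
  alt X Y true s1 -> alt X Y true s2 -> ~~ odd (size s1) -> ~~ odd (size s2) ->
  pairup s1 = pairup s2 -> s1 = s2.
Proof.
move=> HP.
move: {2}(size s1) (leqnn (size s1)) => n; elim: n s1 s2 => [|n IH] [|a [|b r]] [|c [|d r']] //= Hs.
- move=> [Ha [Hb Hr]] [Hc [Hd Hr']] Ho Ho' [E1 E2].
  have [-> ->] := pref_eq HP Ha Hc E1.
  rewrite (IH r r') //; first lia.
  + by rewrite negbK in Ho.
  + by rewrite negbK in Ho'.
Qed.

Lemma alt_rcons X Y b s u : alt X Y b s ->
  (if b (+) odd (size s) then X u else Y u) -> alt X Y b (rcons s u).
Proof.
elim: s b => [|v s IH] b /=.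
- by rewrite addbF => _ H; split.
- move=> [Hv Hs] Hu; split => //; apply: IH => //.
  by move: Hu; rewrite addbN -addNb.
Qed.

Lemma flatten_rcons (s : seq (seq A)) u : flatten (rcons s u) = flatten s ++ u.
Proof. by rewrite -cats1 flatten_cat /= cats0. Qed.

End Aux.

Theorem propositionP (A : finType) (X Y : lang A) :
  (exists x, X x) -> (exists y, Y y) -> in_Aplus X -> in_Aplus Y ->
  (is_prefix_code X -> is_suffix_code Y -> is_code (catl X Y) ->
     strong_alt_code X Y) /\
  (strong_alt_code X Y -> is_prefix_code X /\ is_suffix_code Y).
Proof.
move=> [x0 Hx0] [y0 Hy0] HX HY; split.
- move=> HP HS [_ HC].
  have Hev : forall s1 s2, alt X Y true s1 -> alt X Y true s2 ->
      ~~ odd (size s1) -> ~~ odd (size s2) -> flatten s1 = flatten s2 -> s1 = s2.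
    move=> s1 s2 H1 H2 O1 O2 E; apply: (even_uniq HP H1 H2 O1 O2).
    apply: HC; [exact: pairup_mem H1 O1|exact: pairup_mem H2 O2|].
    by rewrite !pairup_flatten.
  split.
  + split; [by exists x0|by exists y0|done|done|].
    move=> b s1 s2 H1 H2 _ _ Ho E.
    case: b H1 H2 => H1 H2.
    * case Od: (odd (size s1)).
      -- have := Hev (rcons s1 y0) (rcons s2 y0).
         rewrite !size_rcons /= -Ho Od !flatten_rcons E => H.
         have H1r : alt X Y true (rcons s1 y0) by apply: alt_rcons => //=; rewrite Od.
         have H2r : alt X Y true (rcons s2 y0) by apply: alt_rcons => //=; rewrite -Ho Od.
         exact: (congr1 fst (rcons_inj (H H1r H2r isT isT erefl))).
      -- apply: Hev => //; by rewrite ?Od // -Ho Od.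
    * case Od: (odd (size s1)).
      -- have := Hev (x0 :: s1) (x0 :: s2).
         rewrite /= -Ho Od E => H. by case: (H (conj Hx0 H1) (conj Hx0 H2) isT isT erefl).
      -- have H1' : alt X Y true (rcons (x0 :: s1) y0).
           by apply: alt_rcons => //=; rewrite Od.
         have H2' : alt X Y true (rcons (x0 :: s2) y0).
           by apply: alt_rcons => //=; rewrite -Ho Od.
         have Hf : flatten (rcons (x0 :: s1) y0) = flatten (rcons (x0 :: s2) y0).
           by rewrite !flatten_rcons /= E.
         have O1 : ~~ odd (size (rcons (x0 :: s1) y0)) by rewrite size_rcons /= Od.
         have O2 : ~~ odd (size (rcons (x0 :: s2) y0)) by rewrite size_rcons /= -Ho Od.
         by case: (congr1 fst (rcons_inj (Hev _ _ H1' H2' O1 O2 Hf))).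
  + move=> u [x [Hx [x' [y' [Hx' Hy' E]]]]].
    by have [_ ->] := pref_eq HP Hx Hx' E.
  + move=> u [y [Hy [x' [y' [Hx' Hy' E]]]]].
    by have [-> _] := suff_eq HS Hy Hy' E.
- move=> [[_ _ _ _ Halt] HL HR]; split; split => //.
  + move=> x y t Hx Hy E.
    have Ht : Y (t ++ y0).
      apply: HL; exists x; split => //; exists y, y0; split => //.
      by rewrite E catA.
    have := Halt true [:: x; t ++ y0] [:: y; y0].
    move=> /(_ (conj Hx (conj Ht I)) (conj Hy (conj Hy0 I)) isT isT erefl).
    rewrite /= !cats0 E -catA => /(_ erefl) [Exy Et].
    move: Et => /(congr1 size); rewrite size_cat; case: (t) => //= ? ?; lia.
  + move=> x y t Hx Hy E.
    have Ht : X (x0 ++ t).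
      apply: HR; exists x; split => //; exists x0, y; split => //.
      by rewrite E catA.
    have := Halt true [:: x0 ++ t; x] [:: x0; y].
    move=> /(_ (conj Ht (conj Hx I)) (conj Hx0 (conj Hy I)) isT isT erefl).
    rewrite /= !cats0 E -catA => /(_ erefl) [Et Exy].
    move: Et => /(congr1 size); rewrite size_cat; case: (t) => //= ? ?; lia.
Qed.
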